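(* For every integer $s\ge0$ there is a positive constant $C$ such that for every smooth function $\psi$ on $\mathbb{R}\times\mathbb{R}^2$, $$|\Gamma\psi(t,x)|_s\le C|x|\,|\psi(t,x)|_{Z,s}+C\langle t-|x|\rangle|\partial\psi(t,x)|_s$$ for all $(t,x)$ with $x\ne0$.
   Context: $\partial_0=\partial_t$, $\partial_j=\partial/\partial x_j$; $\partial\psi=(\partial_0\psi,\partial_1\psi,\partial_2\psi)$. $S=t\partial_t+x_1\partial_1+x_2\partial_2$, $L_j=t\partial_j+x_j\partial_t$ ($j=1,2$), $\Omega=x_1\partial_2-x_2\partial_1$, $\Gamma=(\Gamma_0,\dots,\Gamma_6)=(S,L_1,L_2,\Omega,\partial_0,\partial_1,\partial_2)$, $\Gamma^\alpha=\Gamma_0^{\alpha_0}\cdots\Gamma_6^{\alpha_6}$, $|\phi|_s=\sum_{|\alpha|\le s}|\Gamma^\alpha\phi|$ (for vector-valued $\phi$ such as $\Gamma\psi$ or $\partial\psi$, sum of absolute values of components). $Z_k=\frac{x_k}{|x|}\partial_t+\partial_k$ ($k=1,2$, $x\ne0$), and $|\psi(t,x)|_{Z,s}=\sum_{k=1}^2\sum_{|\alpha|\le s}|Z_k\Gamma^\alpha\psi(t,x)|$. $\langle y\rangle=(1+|y|^2)^{1/2}$. *)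

(* Defs.v *)
From Stdlib Require Import Reals List.
From Coquelicot Require Import Coquelicot.
Import ListNotations.
Open Scope R_scope.

(* Functions on R x R^2, written psi t x1 x2. *)
Definition fn := R -> R -> R -> R.

Definition d0 (f : fn) : fn := fun t x1 x2 => Derive (fun s => f s x1 x2) t.
Definition d1 (f : fn) : fn := fun t x1 x2 => Derive (fun y => f t y x2) x1.
Definition d2 (f : fn) : fn := fun t x1 x2 => Derive (fun y => f t x1 y) x2.

Definition dir (i : nat) (f : fn) : fn :=
  match i with 0%nat => d0 f | 1%nat => d1 f | _ => d2 f end.

Fixpoint Dword (w : list nat) (f : fn) : fn :=
  match w with [] => f | i :: w' => dir i (Dword w' f) end.

Definition cont3 (g : fn) : Prop :=
  forall t x1 x2 eps, 0 < eps -> exists del, 0 < del /\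
    forall t' y1 y2, Rabs (t' - t) < del -> Rabs (y1 - x1) < del ->
      Rabs (y2 - x2) < del -> Rabs (g t' y1 y2 - g t x1 x2) < eps.

Definition smooth (f : fn) : Prop :=
  forall w : list nat,
    cont3 (Dword w f) /\
    forall t x1 x2,
      ex_derive (fun s => Dword w f s x1 x2) t /\
      ex_derive (fun y => Dword w f t y x2) x1 /\
      ex_derive (fun y => Dword w f t x1 y) x2.

Definition S_op (f : fn) : fn :=
  fun t x1 x2 => t * d0 f t x1 x2 + x1 * d1 f t x1 x2 + x2 * d2 f t x1 x2.
Definition L1_op (f : fn) : fn := fun t x1 x2 => t * d1 f t x1 x2 + x1 * d0 f t x1 x2.
Definition L2_op (f : fn) : fn := fun t x1 x2 => t * d2 f t x1 x2 + x2 * d0 f t x1 x2.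
Definition Om_op (f : fn) : fn := fun t x1 x2 => x1 * d2 f t x1 x2 - x2 * d1 f t x1 x2.

Definition Gam (j : nat) (f : fn) : fn :=
  match j with
  | 0%nat => S_op f | 1%nat => L1_op f | 2%nat => L2_op f | 3%nat => Om_op f
  | 4%nat => d0 f | 5%nat => d1 f | _ => d2 f end.

(* Gamma^alpha = Gamma_0^{a0} ... Gamma_6^{a6}, alpha = [a0; ...; a6] *)
Fixpoint gam_from (i : nat) (alpha : list nat) (f : fn) : fn :=
  match alpha with
  | [] => f
  | a :: rest => Nat.iter a (Gam i) (gam_from (S i) rest f)
  end.
Definition GamPow (alpha : list nat) (f : fn) : fn := gam_from 0 alpha f.

(* all lists of length k of naturals with sum <= s (each exactly once) *)
Fixpoint multi_indices (k s : nat) : list (list nat) :=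
  match k with
  | O => [[]]
  | S k' => flat_map (fun a => map (cons a) (multi_indices k' (s - a)))
                     (seq 0 (S s))
  end.

Definition sumR (l : list R) : R := fold_right Rplus 0 l.

Definition seminorm (s : nat) (phi : fn) (t x1 x2 : R) : R :=
  sumR (map (fun alpha => Rabs (GamPow alpha phi t x1 x2)) (multi_indices 7 s)).

Definition normGamma (s : nat) (psi : fn) (t x1 x2 : R) : R :=
  sumR (map (fun j => seminorm s (Gam j psi) t x1 x2) (seq 0 7)).

Definition normDeriv (s : nat) (psi : fn) (t x1 x2 : R) : R :=
  sumR (map (fun j => seminorm s (dir j psi) t x1 x2) (seq 0 3)).

Definition normx (x1 x2 : R) : R := sqrt (x1 ^ 2 + x2 ^ 2).
Definition japan (y : R) : R := sqrt (1 + y ^ 2).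

Definition Z1 (f : fn) : fn := fun t x1 x2 => x1 / normx x1 x2 * d0 f t x1 x2 + d1 f t x1 x2.
Definition Z2 (f : fn) : fn := fun t x1 x2 => x2 / normx x1 x2 * d0 f t x1 x2 + d2 f t x1 x2.

Definition normZ (s : nat) (psi : fn) (t x1 x2 : R) : R :=
  sumR (map (fun alpha => Rabs (Z1 (GamPow alpha psi) t x1 x2)
                        + Rabs (Z2 (GamPow alpha psi) t x1 x2))
            (multi_indices 7 s)).

(* Main.v *)
Require Import Defs.
From Stdlib Require Import Reals.
From Coquelicot Require Import Coquelicot.
From Stdlib Require Import Lra Lia List FunctionalExtensionality.
Import ListNotations.
Open Scope R_scope.

Definition lline (i:nat) (h:fn) t x1 x2 : R -> R :=
  match i with 0%nat => fun s => h s x1 x2 | 1%nat => fun s => h t s x2 | _ => fun s => h t x1 s end.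
Definition lpos (i:nat) (t x1 x2 : R) : R := match i with 0%nat => t | 1%nat => x1 | _ => x2 end.

Lemma dir_line i h t x1 x2 : dir i h t x1 x2 = Derive (lline i h t x1 x2) (lpos i t x1 x2).
Proof. destruct i as [|[|i]]; reflexivity. Qed.

Lemma exd_plus (f g : R -> R) x : ex_derive f x -> ex_derive g x -> ex_derive (fun y => f y + g y) x.
Proof. intros; apply (ex_derive_plus f g); auto. Qed.
Lemma exd_mult (f g : R -> R) x : ex_derive f x -> ex_derive g x -> ex_derive (fun y => f y * g y) x.
Proof. intros; apply (ex_derive_mult f g); auto. Qed.
Lemma exd_minus (f g : R -> R) x : ex_derive f x -> ex_derive g x -> ex_derive (fun y => f y - g y) x.
Proof. intros; apply (ex_derive_minus f g); auto. Qed.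
Lemma Der_plus (f g : R -> R) x : ex_derive f x -> ex_derive g x -> Derive (fun y => f y + g y) x = Derive f x + Derive g x.
Proof. intros; apply (Derive_plus f g); auto. Qed.
Lemma Der_minus (f g : R -> R) x : ex_derive f x -> ex_derive g x -> Derive (fun y => f y - g y) x = Derive f x - Derive g x.
Proof. intros; apply (Derive_minus f g); auto. Qed.

Definition pdiff (h : fn) := forall i t x1 x2, ex_derive (lline i h t x1 x2) (lpos i t x1 x2).

Lemma smooth_pdiff f : smooth f -> forall w, pdiff (Dword w f).
Proof.
  intros H w i t x1 x2. destruct (H w) as [_ H2]. destruct (H2 t x1 x2) as [a [b c]].
  destruct i as [|[|i]]; assumption.
Qed.

Lemma smooth_coind (K : fn -> Prop) :
  (forall h, K h -> cont3 h /\ pdiff h /\ forall i, K (dir i h)) -> forall f, K f -> smooth f.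
Proof.
  intros HK f Kf.
  assert (forall w, K (Dword w f)).
  { induction w as [|i w IH]; simpl; auto. apply (HK _ IH). }
  intros w. destruct (HK _ (H w)) as [c [p _]]. split; auto.
  intros t x1 x2. repeat split; [apply (p 0%nat)|apply (p 1%nat)|apply (p 2%nat)].
Qed.

Lemma cont3_plus g h : cont3 g -> cont3 h -> cont3 (fun t x1 x2 => g t x1 x2 + h t x1 x2).
Proof.
  intros Hg Hh t x1 x2 eps Heps.
  destruct (Hg t x1 x2 (eps/2)) as [d1 [Hd1 P1]]; [lra|].
  destruct (Hh t x1 x2 (eps/2)) as [d2 [Hd2 P2]]; [lra|].
  exists (Rmin d1 d2). split; [apply Rmin_pos; auto|].
  intros t' y1 y2 A B C.
  assert (A1 := Rlt_le_trans _ _ _ A (Rmin_l d1 d2)).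
  assert (A2 := Rlt_le_trans _ _ _ A (Rmin_r d1 d2)).
  assert (B1 := Rlt_le_trans _ _ _ B (Rmin_l d1 d2)).
  assert (B2 := Rlt_le_trans _ _ _ B (Rmin_r d1 d2)).
  assert (C1 := Rlt_le_trans _ _ _ C (Rmin_l d1 d2)).
  assert (C2 := Rlt_le_trans _ _ _ C (Rmin_r d1 d2)).
  specialize (P1 _ _ _ A1 B1 C1). specialize (P2 _ _ _ A2 B2 C2).
  replace (g t' y1 y2 + h t' y1 y2 - (g t x1 x2 + h t x1 x2)) with
    ((g t' y1 y2 - g t x1 x2) + (h t' y1 y2 - h t x1 x2)) by ring.
  eapply Rle_lt_trans; [apply Rabs_triang|]. lra.
Qed.

Lemma cont3_mult g h : cont3 g -> cont3 h -> cont3 (fun t x1 x2 => g t x1 x2 * h t x1 x2).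
Proof.
  intros Hg Hh t x1 x2 eps Heps.
  set (G := Rabs (g t x1 x2)). set (H := Rabs (h t x1 x2)).
  assert (HG : 0 <= G) by apply Rabs_pos. assert (HH : 0 <= H) by apply Rabs_pos.
  set (e2 := Rmin 1 (eps / (2 * (G + 1)))).
  set (e1 := eps / (2 * (H + 1))).
  assert (Pe2 : 0 < e2). { apply Rmin_pos; [lra|]. apply Rdiv_lt_0_compat; lra. }
  assert (Pe1 : 0 < e1). { apply Rdiv_lt_0_compat; lra. }
  destruct (Hg t x1 x2 e1 Pe1) as [d1 [Hd1 P1]].
  destruct (Hh t x1 x2 e2 Pe2) as [d2 [Hd2 P2]].
  exists (Rmin d1 d2). split; [apply Rmin_pos; auto|].
  intros t' y1 y2 A B C.
  assert (A1 := Rlt_le_trans _ _ _ A (Rmin_l d1 d2)).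
  assert (A2 := Rlt_le_trans _ _ _ A (Rmin_r d1 d2)).
  assert (B1 := Rlt_le_trans _ _ _ B (Rmin_l d1 d2)).
  assert (B2 := Rlt_le_trans _ _ _ B (Rmin_r d1 d2)).
  assert (C1 := Rlt_le_trans _ _ _ C (Rmin_l d1 d2)).
  assert (C2 := Rlt_le_trans _ _ _ C (Rmin_r d1 d2)).
  specialize (P1 _ _ _ A1 B1 C1). specialize (P2 _ _ _ A2 B2 C2).
  set (a := g t' y1 y2 - g t x1 x2) in *. set (b := h t' y1 y2 - h t x1 x2) in *.
  replace (g t' y1 y2 * h t' y1 y2 - g t x1 x2 * h t x1 x2) with
    (a * (h t x1 x2 + b) + g t x1 x2 * b) by (unfold a, b; ring).
  eapply Rle_lt_trans; [apply Rabs_triang|]. rewrite !Rabs_mult.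
  assert (e2a : e2 <= eps / (2 * (G + 1))) by apply Rmin_r.
  assert (e2b : e2 <= 1) by apply Rmin_l.
  assert (Hb: Rabs (h t x1 x2 + b) <= H + 1).
  { eapply Rle_trans; [apply Rabs_triang|]. fold H. lra. }
  assert (X1 : Rabs a * Rabs (h t x1 x2 + b) <= e1 * (H + 1)).
  { apply Rmult_le_compat; try apply Rabs_pos; lra. }
  assert (X2 : G * Rabs b <= G * e2). { apply Rmult_le_compat_l; lra. }
  assert (E2 : G * e2 < eps / 2).
  { apply Rle_lt_trans with (G * (eps / (2 * (G + 1)))).
    apply Rmult_le_compat_l; lra.
    apply (Rmult_lt_reg_r (2 * (G+1))); [lra|].
    field_simplify; [|lra]. nra. }
  assert (E1 : e1 * (H + 1) = eps / 2) by (unfold e1; field; lra).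
  fold G. lra.
Qed.

Record coef := mkC { k0 : R; k1 : R; k2 : R; k3 : R }.
Definition aff (c : coef) : fn := fun t x1 x2 => k0 c + k1 c * t + k2 c * x1 + k3 c * x2.
Definition coefi (i : nat) (c : coef) : R := match i with 0%nat => k1 c | 1%nat => k2 c | _ => k3 c end.

Definition Ksum (l : list (coef * fn)) : fn :=
  fun t x1 x2 => sumR (map (fun p => aff (fst p) t x1 x2 * snd p t x1 x2) l).

Lemma cont3_const c : cont3 (fun _ _ _ => c).
Proof. intros t x1 x2 eps He. exists 1. split; [lra|]. intros. rewrite Rminus_eq_0, Rabs_R0. auto. Qed.
Lemma cont3_t : cont3 (fun t _ _ => t).
Proof. intros t x1 x2 eps He. exists eps. split; auto. Qed.
Lemma cont3_x1 : cont3 (fun _ x1 _ => x1).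
Proof. intros t x1 x2 eps He. exists eps. split; auto. Qed.
Lemma cont3_x2 : cont3 (fun _ _ x2 => x2).
Proof. intros t x1 x2 eps He. exists eps. split; auto. Qed.

Lemma cont3_aff c : cont3 (aff c).
Proof.
  unfold aff. repeat apply cont3_plus; try apply cont3_mult;
  auto using cont3_const, cont3_t, cont3_x1, cont3_x2.
Qed.

Lemma cont3_ext g h : (forall t x1 x2, g t x1 x2 = h t x1 x2) -> cont3 g -> cont3 h.
Proof. intros E Hg t x1 x2 eps He. destruct (Hg t x1 x2 eps He) as [d [Hd P]].
  exists d. split; auto. intros. rewrite <- !E. auto. Qed.

Lemma cont3_Ksum l : List.Forall (fun p => smooth (snd p)) l -> cont3 (Ksum l).
Proof.
  induction 1 as [|p l Hp Hl IH].
  - unfold Ksum; simpl. apply cont3_const.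
  - unfold Ksum; simpl. apply cont3_plus; [|exact IH].
    apply cont3_mult; [apply cont3_aff|]. exact (proj1 (Hp nil)).
Qed.

Lemma smooth_pdiff0 f : smooth f -> pdiff f.
Proof. intros H. exact (smooth_pdiff f H nil). Qed.

Lemma ex_derive_aff i c t x1 x2 : ex_derive (lline i (aff c) t x1 x2) (lpos i t x1 x2).
Proof. unfold aff; destruct i as [|[|i]]; simpl; auto_derive; auto. Qed.

Lemma Derive_aff i c t x1 x2 : Derive (lline i (aff c) t x1 x2) (lpos i t x1 x2) = coefi i c.
Proof. unfold aff; destruct i as [|[|i]]; simpl; apply is_derive_unique; auto_derive; auto; ring. Qed.

Lemma line_plus i g h t x1 x2 :
  lline i (fun t x1 x2 => g t x1 x2 + h t x1 x2) t x1 x2 = fun s => lline i g t x1 x2 s + lline i h t x1 x2 s.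
Proof. destruct i as [|[|i]]; reflexivity. Qed.
Lemma line_mult i g h t x1 x2 :
  lline i (fun t x1 x2 => g t x1 x2 * h t x1 x2) t x1 x2 = fun s => lline i g t x1 x2 s * lline i h t x1 x2 s.
Proof. destruct i as [|[|i]]; reflexivity. Qed.
Lemma line_const i c t x1 x2 : lline i (fun _ _ _ => c) t x1 x2 = fun _ => c.
Proof. destruct i as [|[|i]]; reflexivity. Qed.

Lemma pdiff_Ksum l : List.Forall (fun p => smooth (snd p)) l -> pdiff (Ksum l).
Proof.
  induction 1 as [|p l Hp Hl IH]; intros i t x1 x2.
  - unfold Ksum; simpl. rewrite line_const. apply ex_derive_const.
  - change (Ksum (p :: l)) with (fun t x1 x2 => aff (fst p) t x1 x2 * snd p t x1 x2 + Ksum l t x1 x2).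
    rewrite line_plus, line_mult. apply exd_plus; [|apply IH].
    apply exd_mult; [apply ex_derive_aff|apply (smooth_pdiff0 _ Hp)].
Qed.

Definition dl (i : nat) (l : list (coef * fn)) : list (coef * fn) :=
  flat_map (fun p => [(mkC (coefi i (fst p)) 0 0 0, snd p); (fst p, dir i (snd p))]) l.

Lemma dir_Ksum i l : List.Forall (fun p => smooth (snd p)) l ->
  forall t x1 x2, dir i (Ksum l) t x1 x2 = Ksum (dl i l) t x1 x2.
Proof.
  induction 1 as [|p l Hp Hl IH]; intros t x1 x2; rewrite dir_line.
  - unfold Ksum; simpl. rewrite line_const. apply Derive_const.
  - change (Ksum (p :: l)) with (fun t x1 x2 => aff (fst p) t x1 x2 * snd p t x1 x2 + Ksum l t x1 x2).
    rewrite line_plus, line_mult.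
    rewrite Der_plus; [| apply exd_mult; [apply ex_derive_aff|apply (smooth_pdiff0 _ Hp)] | apply (pdiff_Ksum _ Hl)].
    rewrite Derive_mult; [| apply ex_derive_aff|apply (smooth_pdiff0 _ Hp)].
    rewrite Derive_aff, <- dir_line, <- dir_line, IH.
    unfold Ksum; simpl. unfold aff at 2; simpl.
    destruct i as [|[|i]]; simpl; unfold Ksum, aff; simpl; ring.
Qed.

Lemma smooth_dir i f : smooth f -> smooth (dir i f).
Proof.
  intros H w. assert (E : Dword w (dir i f) = Dword (w ++ [i]) f).
  { induction w as [|j w IH]; simpl; auto. rewrite IH; auto. }
  rewrite E. apply H.
Qed.

Definition Kcls (h : fn) := exists l, List.Forall (fun p => smooth (snd p)) l /\
  forall t x1 x2, h t x1 x2 = Ksum l t x1 x2.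

Lemma Forall_dl i l : List.Forall (fun p => smooth (snd p)) l -> List.Forall (fun p => smooth (snd p)) (dl i l).
Proof.
  induction 1; simpl; auto. constructor; [auto|]. constructor; [apply smooth_dir; auto|auto].
Qed.

Lemma Kcls_smooth h : Kcls h -> smooth h.
Proof.
  apply smooth_coind. intros g [l [Hl E]].
  assert (Eg : g = Ksum l) by (do 3 (apply functional_extensionality; intro); apply E).
  subst g. split; [apply cont3_Ksum; auto|]. split; [apply pdiff_Ksum; auto|].
  intros i. exists (dl i l). split; [apply Forall_dl; auto|]. apply dir_Ksum; auto.
Qed.

Ltac fa := simpl; repeat (apply List.Forall_cons; [simpl; assumption|]); apply List.Forall_nil.

Lemma Kcls_ext g h : (forall t x1 x2, g t x1 x2 = h t x1 x2) -> Kcls g -> Kcls h.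
Proof. intros E [l [Hl Hg]]. exists l. split; auto. intros. rewrite <- E; auto. Qed.

Lemma Kcls_of l : List.Forall (fun p => smooth (snd p)) l -> Kcls (Ksum l).
Proof. intros H. exists l. split; auto. Qed.

Lemma Ksum_app l1 l2 t x1 x2 : Ksum (l1 ++ l2) t x1 x2 = Ksum l1 t x1 x2 + Ksum l2 t x1 x2.
Proof. induction l1; unfold Ksum in *; simpl; [ring|]. rewrite IHl1. ring. Qed.

Definition scaleC (c : R) (k : coef) := mkC (c * k0 k) (c * k1 k) (c * k2 k) (c * k3 k).
Lemma Ksum_scal c l t x1 x2 : Ksum (map (fun p => (scaleC c (fst p), snd p)) l) t x1 x2 = c * Ksum l t x1 x2.
Proof. induction l as [|a l IHl]. { unfold Ksum; simpl. rewrite Rmult_0_r; reflexivity. } change (Ksum (map (fun p => (scaleC c (fst p), snd p)) (a :: l)) t x1 x2) with (aff (scaleC c (fst a)) t x1 x2 * snd a t x1 x2 + Ksum (map (fun p => (scaleC c (fst p), snd p)) l) t x1 x2). change (Ksum (a :: l) t x1 x2) with (aff (fst a) t x1 x2 * snd a t x1 x2 + Ksum l t x1 x2). rewrite IHl. unfold aff, scaleC; simpl. ring. Qed.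

Lemma smooth_plus g h : smooth g -> smooth h -> smooth (fun t x1 x2 => g t x1 x2 + h t x1 x2).
Proof.
  intros Hg Hh. apply Kcls_smooth.
  apply Kcls_ext with (Ksum ([(mkC 1 0 0 0, g)] ++ [(mkC 1 0 0 0, h)])).
  { intros. rewrite Ksum_app. unfold Ksum, aff; simpl; ring. }
  apply Kcls_of; fa.
Qed.

Lemma smooth_scal c g : smooth g -> smooth (fun t x1 x2 => c * g t x1 x2).
Proof.
  intros Hg. apply Kcls_smooth.
  apply Kcls_ext with (Ksum [(mkC c 0 0 0, g)]).
  { intros. unfold Ksum, aff; simpl; ring. }
  apply Kcls_of; fa.
Qed.

Lemma smooth_ext g h : (forall t x1 x2, g t x1 x2 = h t x1 x2) -> smooth g -> smooth h.
Proof.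
  intros E H. assert (g = h) by (do 3 (apply functional_extensionality; intro); apply E).
  subst; auto.
Qed.

Lemma smooth_zero : smooth (fun _ _ _ => 0).
Proof.
  apply Kcls_smooth. apply Kcls_ext with (Ksum []). { intros; reflexivity. }
  apply Kcls_of; constructor.
Qed.

Lemma smooth_Gam j g : smooth g -> smooth (Gam j g).
Proof.
  intros Hg.
  assert (H0 := smooth_dir 0 g Hg). assert (H1 := smooth_dir 1 g Hg). assert (H2 := smooth_dir 2 g Hg).
  simpl in H0, H1, H2.
  destruct j as [|[|[|[|[|[|j]]]]]]; simpl; auto; apply Kcls_smooth.
  - apply Kcls_ext with (Ksum [(mkC 0 1 0 0, d0 g); (mkC 0 0 1 0, Defs.d1 g); (mkC 0 0 0 1, Defs.d2 g)]).
    { intros. unfold Ksum, aff, S_op; simpl; ring. }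
    apply Kcls_of; fa.
  - apply Kcls_ext with (Ksum [(mkC 0 1 0 0, Defs.d1 g); (mkC 0 0 1 0, d0 g)]).
    { intros. unfold Ksum, aff, L1_op; simpl; ring. }
    apply Kcls_of; fa.
  - apply Kcls_ext with (Ksum [(mkC 0 1 0 0, Defs.d2 g); (mkC 0 0 0 1, d0 g)]).
    { intros. unfold Ksum, aff, L2_op; simpl; ring. }
    apply Kcls_of; fa.
  - apply Kcls_ext with (Ksum [(mkC 0 0 1 0, Defs.d2 g); (mkC 0 0 0 (-1), Defs.d1 g)]).
    { intros. unfold Ksum, aff, Om_op; simpl; ring. }
    apply Kcls_of; fa.
Qed.

Lemma smooth_iter a j g : smooth g -> smooth (Nat.iter a (Gam j) g).
Proof. induction a; simpl; auto using smooth_Gam. Qed.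

Lemma smooth_gam_from i al g : smooth g -> smooth (gam_from i al g).
Proof. revert i; induction al; intros i H; simpl; auto using smooth_iter. Qed.

Lemma smooth_GamPow al g : smooth g -> smooth (GamPow al g).
Proof. apply smooth_gam_from. Qed.

Definition cont2at (F : R -> R -> R) x y := forall eps, 0 < eps -> exists del, 0 < del /\
  forall u v, Rabs (u - x) < del -> Rabs (v - y) < del -> Rabs (F u v - F x y) < eps.

Lemma schwarz_gen (f : R -> R -> R) x y :
  (forall u v, ex_derive (fun z => f z v) u /\ ex_derive (fun z => f u z) v /\
     ex_derive (fun z => Derive (fun t => f z t) v) u /\ ex_derive (fun z => Derive (fun t => f t z) u) v) ->
  cont2at (fun u v => Derive (fun z => Derive (fun t => f z t) v) u) x y ->
  cont2at (fun u v => Derive (fun z => Derive (fun t => f t z) u) v) x y ->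
  Derive (fun z => Derive (fun t => f z t) y) x = Derive (fun z => Derive (fun t => f t z) x) y.
Proof.
  intros H C1 C2. apply Schwarz.
  - exists (mkposreal 1 Rlt_0_1). intros; apply H.
  - intros eps. destruct (C1 eps (cond_pos eps)) as [d [Hd P]]. exists (mkposreal d Hd). intros; apply P; auto.
  - intros eps. destruct (C2 eps (cond_pos eps)) as [d [Hd P]]. exists (mkposreal d Hd). intros; apply P; auto.
Qed.

Lemma sm_ex f w i t x1 x2 : smooth f -> ex_derive (lline i (Dword w f) t x1 x2) (lpos i t x1 x2).
Proof. intros H. apply (smooth_pdiff f H w). Qed.

Lemma sm_cont f w : smooth f -> cont3 (Dword w f).
Proof. intros H. apply (H w). Qed.

Lemma Rabs0lt d : 0 < d -> Rabs (0) < d.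
Proof. intros; rewrite Rabs_R0; auto. Qed.

Lemma sw10 g t x1 x2 : smooth g -> dir 1 (dir 0 g) t x1 x2 = dir 0 (dir 1 g) t x1 x2.
Proof.
  intros Hg. symmetry.
  apply (schwarz_gen (fun u v => g u v x2) t x1).
  - intros u v. repeat split.
    + apply (sm_ex g [] 0 u v x2 Hg).
    + apply (sm_ex g [] 1 u v x2 Hg).
    + apply (sm_ex g [1%nat] 0 u v x2 Hg).
    + apply (sm_ex g [0%nat] 1 u v x2 Hg).
  - intros eps He. destruct (sm_cont g [0;1]%nat Hg t x1 x2 eps He) as [d [Hd P]].
    exists d; split; auto. intros u v A B. apply (P u v x2 A B). rewrite Rminus_eq_0; apply Rabs0lt; auto.
  - intros eps He. destruct (sm_cont g [1;0]%nat Hg t x1 x2 eps He) as [d [Hd P]].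
    exists d; split; auto. intros u v A B. apply (P u v x2 A B). rewrite Rminus_eq_0; apply Rabs0lt; auto.
Qed.

Lemma sw20 g t x1 x2 : smooth g -> dir 2 (dir 0 g) t x1 x2 = dir 0 (dir 2 g) t x1 x2.
Proof.
  intros Hg. symmetry.
  apply (schwarz_gen (fun u v => g u x1 v) t x2).
  - intros u v. repeat split.
    + apply (sm_ex g [] 0 u x1 v Hg).
    + apply (sm_ex g [] 2 u x1 v Hg).
    + apply (sm_ex g [2%nat] 0 u x1 v Hg).
    + apply (sm_ex g [0%nat] 2 u x1 v Hg).
  - intros eps He. destruct (sm_cont g [0;2]%nat Hg t x1 x2 eps He) as [d [Hd P]].
    exists d; split; auto. intros u v A B. apply (P u x1 v A); auto. rewrite Rminus_eq_0; apply Rabs0lt; auto.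
  - intros eps He. destruct (sm_cont g [2;0]%nat Hg t x1 x2 eps He) as [d [Hd P]].
    exists d; split; auto. intros u v A B. apply (P u x1 v A); auto. rewrite Rminus_eq_0; apply Rabs0lt; auto.
Qed.

Lemma sw21 g t x1 x2 : smooth g -> dir 2 (dir 1 g) t x1 x2 = dir 1 (dir 2 g) t x1 x2.
Proof.
  intros Hg. symmetry.
  apply (schwarz_gen (fun u v => g t u v) x1 x2).
  - intros u v. repeat split.
    + apply (sm_ex g [] 1 t u v Hg).
    + apply (sm_ex g [] 2 t u v Hg).
    + apply (sm_ex g [2%nat] 1 t u v Hg).
    + apply (sm_ex g [1%nat] 2 t u v Hg).
  - intros eps He. destruct (sm_cont g [1;2]%nat Hg t x1 x2 eps He) as [d [Hd P]].
    exists d; split; auto. intros u v A B. apply (P t u v); auto. rewrite Rminus_eq_0; apply Rabs0lt; auto.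
  - intros eps He. destruct (sm_cont g [2;1]%nat Hg t x1 x2 eps He) as [d [Hd P]].
    exists d; split; auto. intros u v A B. apply (P t u v); auto. rewrite Rminus_eq_0; apply Rabs0lt; auto.
Qed.

Definition GamF (i : nat) (D0 D1 D2 t x1 x2 : R) : R :=
  match i with
  | 0%nat => t * D0 + x1 * D1 + x2 * D2
  | 1%nat => t * D1 + x1 * D0
  | 2%nat => t * D2 + x2 * D0
  | 3%nat => x1 * D2 - x2 * D1
  | 4%nat => D0 | 5%nat => D1 | _ => D2 end.

Lemma Gam_GamF i h t x1 x2 : Gam i h t x1 x2 = GamF i (dir 0 h t x1 x2) (dir 1 h t x1 x2) (dir 2 h t x1 x2) t x1 x2.
Proof. destruct i as [|[|[|[|[|[|i]]]]]]; reflexivity. Qed.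

Definition Dj (j : nat) (D0 D1 D2 : R) : R := match j with 0%nat => D0 | 1%nat => D1 | _ => D2 end.

Definition corr (k j : nat) (D0 D1 D2 : R) : R :=
  match k with
  | 0%nat => Dj j D0 D1 D2
  | 1%nat => match j with 0%nat => D1 | 1%nat => D0 | _ => 0 end
  | 2%nat => match j with 0%nat => D2 | 1%nat => 0 | _ => D0 end
  | 3%nat => match j with 0%nat => 0 | 1%nat => D2 | _ => - D1 end
  | _ => 0 end.

Lemma dir_ext i g h t x1 x2 : (forall t x1 x2, g t x1 x2 = h t x1 x2) -> dir i g t x1 x2 = dir i h t x1 x2.
Proof. intros E. assert (g = h) by (do 3 (apply functional_extensionality; intro); apply E). subst; auto. Qed.

Lemma dir_Gam j k g t x1 x2 : smooth g ->
  dir j (Gam k g) t x1 x2 =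
  GamF k (dir j (dir 0 g) t x1 x2) (dir j (dir 1 g) t x1 x2) (dir j (dir 2 g) t x1 x2) t x1 x2
  + corr k j (dir 0 g t x1 x2) (dir 1 g t x1 x2) (dir 2 g t x1 x2).
Proof.
  intros Hg.
  assert (H0 := smooth_dir 0 g Hg). assert (H1 := smooth_dir 1 g Hg). assert (H2 := smooth_dir 2 g Hg).
  destruct k as [|[|[|[|k]]]].
  - rewrite (dir_ext j (Gam 0 g) (Ksum [(mkC 0 1 0 0, dir 0 g); (mkC 0 0 1 0, dir 1 g); (mkC 0 0 0 1, dir 2 g)]));
    [| intros; unfold Ksum, aff; simpl; unfold S_op; ring].
    rewrite dir_Ksum; [|fa]. unfold Ksum, dl, aff; simpl.
    destruct j as [|[|j]]; simpl; ring.
  - rewrite (dir_ext j (Gam 1 g) (Ksum [(mkC 0 1 0 0, dir 1 g); (mkC 0 0 1 0, dir 0 g)]));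
    [| intros; unfold Ksum, aff; simpl; unfold L1_op; ring].
    rewrite dir_Ksum; [|fa]. unfold Ksum, dl, aff; simpl.
    destruct j as [|[|j]]; simpl; ring.
  - rewrite (dir_ext j (Gam 2 g) (Ksum [(mkC 0 1 0 0, dir 2 g); (mkC 0 0 0 1, dir 0 g)]));
    [| intros; unfold Ksum, aff; simpl; unfold L2_op; ring].
    rewrite dir_Ksum; [|fa]. unfold Ksum, dl, aff; simpl.
    destruct j as [|[|j]]; simpl; ring.
  - rewrite (dir_ext j (Gam 3 g) (Ksum [(mkC 0 0 1 0, dir 2 g); (mkC 0 0 0 (-1), dir 1 g)]));
    [| intros; unfold Ksum, aff; simpl; unfold Om_op; ring].
    rewrite dir_Ksum; [|fa]. unfold Ksum, dl, aff; simpl.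
    destruct j as [|[|j]]; simpl; ring.
  - destruct k as [|[|k]]; simpl; ring.
Qed.

Definition ev (l : nat) (c : R) : list R := map (fun m => if Nat.eqb m l then c else 0) (seq 0 7).

Definition ccv (i k : nat) : list R :=
  match i, k with
  | 4%nat, 0%nat => ev 4 1 | 0%nat, 4%nat => ev 4 (-1)
  | 5%nat, 0%nat => ev 5 1 | 0%nat, 5%nat => ev 5 (-1)
  | 6%nat, 0%nat => ev 6 1 | 0%nat, 6%nat => ev 6 (-1)
  | 4%nat, 1%nat => ev 5 1 | 1%nat, 4%nat => ev 5 (-1)
  | 4%nat, 2%nat => ev 6 1 | 2%nat, 4%nat => ev 6 (-1)
  | 5%nat, 1%nat => ev 4 1 | 1%nat, 5%nat => ev 4 (-1)
  | 6%nat, 2%nat => ev 4 1 | 2%nat, 6%nat => ev 4 (-1)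
  | 5%nat, 3%nat => ev 6 1 | 3%nat, 5%nat => ev 6 (-1)
  | 6%nat, 3%nat => ev 5 (-1) | 3%nat, 6%nat => ev 5 1
  | 1%nat, 2%nat => ev 3 1 | 2%nat, 1%nat => ev 3 (-1)
  | 1%nat, 3%nat => ev 2 1 | 3%nat, 1%nat => ev 2 (-1)
  | 2%nat, 3%nat => ev 1 (-1) | 3%nat, 2%nat => ev 1 1
  | _, _ => ev 0 0 end.

Definition cc (i k l : nat) : R := nth l (ccv i k) 0.

Lemma sum7 (F : nat -> R) : sumR (map F (seq 0 7)) = F 0%nat + (F 1%nat + (F 2%nat + (F 3%nat + (F 4%nat + (F 5%nat + (F 6%nat + 0)))))).
Proof. reflexivity. Qed.

Lemma commut i k g t x1 x2 : (i < 7)%nat -> (k < 7)%nat -> smooth g ->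
  Gam i (Gam k g) t x1 x2 = Gam k (Gam i g) t x1 x2 + sumR (map (fun l => cc i k l * Gam l g t x1 x2) (seq 0 7)).
Proof.
  intros Hi Hk Hg. rewrite sum7.
  rewrite !Gam_GamF. rewrite !(fun j k => dir_Gam j k g t x1 x2 Hg).
  rewrite !(sw10 g t x1 x2 Hg), !(sw20 g t x1 x2 Hg), !(sw21 g t x1 x2 Hg).
  assert (i = 0 \/ i = 1 \/ i = 2 \/ i = 3 \/ i = 4 \/ i = 5 \/ i = 6)%nat as Ei by lia.
  assert (k = 0 \/ k = 1 \/ k = 2 \/ k = 3 \/ k = 4 \/ k = 5 \/ k = 6)%nat as Ek by lia.
  destruct Ei as [->|[->|[->|[->|[->|[->| ->]]]]]]; destruct Ek as [->|[->|[->|[->|[->|[->| ->]]]]]];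
  unfold cc, ccv, ev; simpl; ring.
Qed.

Fixpoint incr (i : nat) (l : list nat) {struct l} : list nat :=
  match l with
  | [] => []
  | a :: l' => match i with 0%nat => S a :: l' | S i' => a :: incr i' l' end
  end.

Lemma gam_zeros j m l f : gam_from j (repeat 0%nat m ++ l) f = gam_from (j + m) l f.
Proof. revert j; induction m; intros j; simpl. rewrite Nat.add_0_r; auto. rewrite IHm. f_equal; lia. Qed.

Lemma GamPow_S i b rest f :
  GamPow (repeat 0%nat i ++ S b :: rest) f = Gam i (GamPow (repeat 0%nat i ++ b :: rest) f).
Proof. unfold GamPow. rewrite !gam_zeros. simpl. reflexivity. Qed.

Lemma GamPow_zeros f : GamPow (repeat 0%nat 7) f = f.
Proof. reflexivity. Qed.

Lemma decomp i γ : (i <= length γ)%nat ->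
  (exists δ, γ = repeat 0%nat i ++ δ) \/
  (exists k a rest, (k < i)%nat /\ γ = repeat 0%nat k ++ S a :: rest).
Proof.
  revert γ; induction i; intros γ H.
  - left. exists γ. reflexivity.
  - destruct γ as [|x γ']; simpl in H; [lia|].
    destruct x as [|a].
    + destruct (IHi γ') as [[δ E]|[k [a [rest [Hk E]]]]]; [lia| |].
      * left. exists δ. simpl. rewrite E. reflexivity.
      * right. exists (S k), a, rest. split; [lia|]. simpl. rewrite E. reflexivity.
    + right. exists 0%nat, a, γ'. split; [lia|]. reflexivity.
Qed.

Lemma incr_zeros i b rest : incr i (repeat 0%nat i ++ b :: rest) = repeat 0%nat i ++ S b :: rest.
Proof. induction i; simpl; auto. rewrite IHi; auto. Qed.

Lemma incr_lt i k x rest : (k < i)%nat ->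
  incr i (repeat 0%nat k ++ x :: rest) = repeat 0%nat k ++ x :: incr (i - S k) rest.
Proof.
  revert i; induction k; intros i H; destruct i; try lia; simpl.
  - rewrite Nat.sub_0_r; auto.
  - rewrite IHk by lia. auto.
Qed.

Lemma length_incr i l : length (incr i l) = length l.
Proof. revert i; induction l as [|a l IHl]; intros i; [reflexivity|]. destruct i; simpl; [reflexivity|]. rewrite IHl; reflexivity. Qed.

Lemma sum_incr i l : (i < length l)%nat -> list_sum (incr i l) = S (list_sum l).
Proof.
  revert i; induction l; intros i H; simpl in *; [lia|]. destruct i; simpl; auto.
  rewrite IHl by lia. lia.
Qed.

Lemma sum_S k a rest : list_sum (repeat 0%nat k ++ S a :: rest) = S (list_sum (repeat 0%nat k ++ a :: rest)).
Proof. induction k; simpl; auto. Qed.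

Lemma length_S k a b rest : length (repeat 0%nat k ++ a :: rest) = length (repeat 0%nat k ++ b :: rest).
Proof. rewrite !length_app; simpl; auto. Qed.

Lemma In_mi k n γ : In γ (multi_indices k n) <-> length γ = k /\ (list_sum γ <= n)%nat.
Proof.
  revert n γ; induction k; intros n γ.
  - simpl. split. intros [<-|[]]; simpl; split; auto; lia.
    intros [H _]. destruct γ; simpl in H; [auto|lia].
  - cbn [multi_indices]. rewrite in_flat_map. split.
    + intros [a [Ha Hγ]]. rewrite in_map_iff in Hγ. destruct Hγ as [δ [<- Hδ]].
      apply IHk in Hδ. apply in_seq in Ha. simpl. lia.
    + intros [Hl Hs]. destruct γ as [|a δ]; simpl in Hl; [lia|]. simpl in Hs.
      exists a. split; [apply in_seq; lia|]. apply in_map. apply IHk. lia.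
Qed.

Definition term := (R * list nat * (fn -> fn))%type.

Definition lc (cs : list term) (f : fn) : fn := fun t x1 x2 =>
  sumR (map (fun p => fst (fst p) * GamPow (snd (fst p)) (snd p f) t x1 x2) cs).

Definition USpan (P : list nat -> (fn -> fn) -> Prop) (G : fn -> fn) :=
  exists cs : list term, List.Forall (fun p => P (snd (fst p)) (snd p)) cs /\
    forall f, smooth f -> forall t x1 x2, G f t x1 x2 = lc cs f t x1 x2.

Lemma us_ext P G G' : (forall f, smooth f -> forall t x1 x2, G f t x1 x2 = G' f t x1 x2) ->
  USpan P G -> USpan P G'.
Proof. intros E [cs [H1 H2]]. exists cs. split; auto. intros. rewrite <- E; auto. Qed.

Lemma us_zero P : USpan P (fun _ _ _ _ => 0).
Proof. exists []. split; [constructor|]. intros; reflexivity. Qed.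

Lemma lc_app cs1 cs2 f t x1 x2 : lc (cs1 ++ cs2) f t x1 x2 = lc cs1 f t x1 x2 + lc cs2 f t x1 x2.
Proof. unfold lc. induction cs1 as [|p cs1 IH]; simpl; [ring|]. rewrite IH. ring. Qed.

Lemma us_add P G1 G2 : USpan P G1 -> USpan P G2 ->
  USpan P (fun f t x1 x2 => G1 f t x1 x2 + G2 f t x1 x2).
Proof.
  intros [c1 [A1 B1]] [c2 [A2 B2]]. exists (c1 ++ c2). split.
  - apply List.Forall_app; auto.
  - intros. rewrite lc_app, B1, B2; auto.
Qed.

Definition scl (c : R) (p : term) : term := (c * fst (fst p), snd (fst p), snd p).

Lemma lc_scal c cs f t x1 x2 : lc (map (scl c) cs) f t x1 x2 = c * lc cs f t x1 x2.
Proof.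
  unfold lc. induction cs as [|p cs IH]; simpl. { rewrite Rmult_0_r; reflexivity. }
  rewrite IH. unfold scl; simpl. ring.
Qed.

Lemma us_scal P c G : USpan P G -> USpan P (fun f t x1 x2 => c * G f t x1 x2).
Proof.
  intros [cs [A B]]. exists (map (scl c) cs). split.
  - apply List.Forall_map. eapply List.Forall_impl; [|exact A]. intros p Hp. exact Hp.
  - intros. rewrite lc_scal, B; auto.
Qed.

Lemma us_mono (P Q : list nat -> (fn -> fn) -> Prop) G :
  (forall g B, P g B -> Q g B) -> USpan P G -> USpan Q G.
Proof.
  intros H [cs [A B]]. exists cs. split; auto. eapply List.Forall_impl; [|exact A]. intros; auto.
Qed.

Lemma us_gen (P : list nat -> (fn -> fn) -> Prop) g B : P g B -> USpan P (fun f => GamPow g (B f)).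
Proof.
  intros H. exists [(1, g, B)]. split; [constructor; auto|].
  intros. unfold lc; simpl. ring.
Qed.

Lemma us_sum P (L : list nat) (c : nat -> R) (F : nat -> fn -> fn) :
  (forall l, In l L -> c l = 0 \/ USpan P (F l)) ->
  USpan P (fun f t x1 x2 => sumR (map (fun l => c l * F l f t x1 x2) L)).
Proof.
  induction L as [|l L IH]; intros H.
  - apply us_ext with (fun _ _ _ _ => 0); [intros; reflexivity|]. apply us_zero.
  - simpl. apply us_add.
    + destruct (H l (or_introl eq_refl)) as [E|S].
      * apply us_ext with (fun _ _ _ _ => 0); [intros; rewrite E; ring|]. apply us_zero.
      * apply us_scal; auto.
    + apply IH. intros; apply H; simpl; auto.
Qed.

Lemma smooth_lc (P : list nat -> (fn -> fn) -> Prop) cs f :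
  (forall g B, P g B -> forall f, smooth f -> smooth (B f)) ->
  List.Forall (fun p => P (snd (fst p)) (snd p)) cs -> smooth f -> smooth (lc cs f).
Proof.
  intros HP A Hf. induction A as [|p cs Hp A IH].
  - apply smooth_ext with (fun _ _ _ => 0); [intros; reflexivity|]. apply smooth_zero.
  - apply smooth_ext with (fun t x1 x2 => fst (fst p) * GamPow (snd (fst p)) (snd p f) t x1 x2 + lc cs f t x1 x2);
      [intros; reflexivity|].
    apply smooth_plus; auto. apply smooth_scal. apply smooth_GamPow. eapply HP; eauto.
Qed.

Lemma dir_lin i c g h t x1 x2 : smooth g -> smooth h ->
  dir i (fun t x1 x2 => c * g t x1 x2 + h t x1 x2) t x1 x2 = c * dir i g t x1 x2 + dir i h t x1 x2.
Proof.
  intros Hg Hh. rewrite !dir_line.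
  assert (E : lline i (fun t x1 x2 => c * g t x1 x2 + h t x1 x2) t x1 x2 =
              fun s => c * lline i g t x1 x2 s + lline i h t x1 x2 s) by (destruct i as [|[|i]]; reflexivity).
  rewrite E. rewrite Der_plus.
  - rewrite Derive_scal. reflexivity.
  - apply ex_derive_scal. apply (smooth_pdiff0 _ Hg).
  - apply (smooth_pdiff0 _ Hh).
Qed.

Lemma Gam_lin k c g h t x1 x2 : smooth g -> smooth h ->
  Gam k (fun t x1 x2 => c * g t x1 x2 + h t x1 x2) t x1 x2 = c * Gam k g t x1 x2 + Gam k h t x1 x2.
Proof.
  intros Hg Hh. rewrite !Gam_GamF. rewrite !dir_lin by auto.
  destruct k as [|[|[|[|[|[|k]]]]]]; simpl; ring.
Qed.

Lemma Gam_ext k g h t x1 x2 : (forall t x1 x2, g t x1 x2 = h t x1 x2) -> Gam k g t x1 x2 = Gam k h t x1 x2.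
Proof. intros E. assert (g = h) by (do 3 (apply functional_extensionality; intro); apply E). subst; auto. Qed.

Lemma Gam_zero k t x1 x2 : Gam k (fun _ _ _ => 0) t x1 x2 = 0.
Proof.
  rewrite Gam_GamF, !dir_line, !line_const, !Derive_const.
  destruct k as [|[|[|[|[|[|k]]]]]]; simpl; ring.
Qed.

Lemma us_map k (P Q : list nat -> (fn -> fn) -> Prop) G :
  (forall g B, P g B -> (forall f, smooth f -> smooth (B f)) /\ USpan Q (fun f => Gam k (GamPow g (B f)))) ->
  USpan P G -> USpan Q (fun f => Gam k (G f)).
Proof.
  intros H [cs [A B]].
  apply us_ext with (fun f => Gam k (lc cs f)).
  { intros f Hf t x1 x2. apply Gam_ext. intros; symmetry; apply B; auto. }
  assert (HP : forall g B, P g B -> forall f, smooth f -> smooth (B f)) by (intros; eapply H; eauto).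
  clear B. induction A as [|p cs Hp A IH].
  - apply us_ext with (fun _ _ _ _ => 0); [|apply us_zero].
    intros f Hf t x1 x2. unfold lc; simpl. symmetry; apply Gam_zero.
  - apply us_ext with (fun f t x1 x2 => fst (fst p) * Gam k (GamPow (snd (fst p)) (snd p f)) t x1 x2 + Gam k (lc cs f) t x1 x2).
    + intros f Hf t x1 x2. symmetry.
      change (lc (p :: cs) f) with (fun t x1 x2 => fst (fst p) * GamPow (snd (fst p)) (snd p f) t x1 x2 + lc cs f t x1 x2).
      apply Gam_lin.
      * apply smooth_GamPow. eapply HP; eauto.
      * eapply smooth_lc; eauto.
    + apply us_add; auto. apply us_scal. apply (H _ _ Hp).
Qed.

Lemma us_comp P G (Bc : fn -> fn) : (forall f, smooth f -> smooth (Bc f)) -> USpan P G ->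
  USpan (fun g B' => exists B0, P g B0 /\ B' = (fun f => B0 (Bc f))) (fun f => G (Bc f)).
Proof.
  intros HB [cs [A B]].
  exists (map (fun p => (fst p, fun f => snd p (Bc f))) cs). split.
  - apply List.Forall_map. eapply List.Forall_impl; [|exact A]. intros p Hp. simpl. exists (snd p); auto.
  - intros f Hf t x1 x2. rewrite B by auto. unfold lc. rewrite map_map. reflexivity.
Qed.

Lemma us_bound P G : USpan P G -> exists K, 0 <= K /\ forall f, smooth f -> forall t x1 x2 M,
  (forall g B, P g B -> Rabs (GamPow g (B f) t x1 x2) <= M) -> Rabs (G f t x1 x2) <= K * M.
Proof.
  intros [cs [A B]]. exists (sumR (map (fun p => Rabs (fst (fst p))) cs)). split.
  - clear B A. induction cs; simpl; [lra|]. pose proof (Rabs_pos (fst (fst a))). lra.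
  - intros f Hf t x1 x2 M HM. rewrite B by auto. clear B. unfold lc.
    induction A as [|p cs Hp A IH]; simpl.
    + rewrite Rabs_R0; lra.
    + eapply Rle_trans; [apply Rabs_triang|]. rewrite Rabs_mult.
      specialize (HM _ _ Hp). pose proof (Rabs_pos (fst (fst p))).
      assert (Rabs (fst (fst p)) * Rabs (GamPow (snd (fst p)) (snd p f) t x1 x2) <= Rabs (fst (fst p)) * M)
        by (apply Rmult_le_compat_l; auto).
      lra.
Qed.

Definition Pm (n : nat) : list nat -> (fn -> fn) -> Prop :=
  fun δ B => B = (fun f => f) /\ length δ = 7%nat /\ (1 <= list_sum δ <= n)%nat.

Definition Qdiff (i : nat) (γ : list nat) : fn -> fn :=
  fun f t x1 x2 => Gam i (GamPow γ f) t x1 x2 - GamPow (incr i γ) f t x1 x2.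

Lemma Qgen_of γ i : length γ = 7%nat -> (i < 7)%nat -> USpan (Pm (list_sum γ)) (Qdiff i γ) ->
  USpan (Pm (S (list_sum γ))) (fun f => Gam i (GamPow γ f)).
Proof.
  intros Hl Hi H.
  apply us_ext with (fun f t x1 x2 => GamPow (incr i γ) ((fun f => f) f) t x1 x2 + Qdiff i γ f t x1 x2).
  { intros. unfold Qdiff. ring. }
  apply us_add.
  - apply us_gen. split; auto. rewrite length_incr, sum_incr by lia. split; auto. lia.
  - eapply us_mono; [|exact H]. intros g B [? [? ?]]. split; auto. split; auto. lia.
Qed.

Lemma Gam_lin_minus k g h t x1 x2 : smooth g -> smooth h ->
  Gam k (fun t x1 x2 => g t x1 x2 - h t x1 x2) t x1 x2 = Gam k g t x1 x2 - Gam k h t x1 x2.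
Proof.
  intros Hg Hh.
  rewrite (Gam_ext k _ (fun t x1 x2 => (-1) * h t x1 x2 + g t x1 x2)) by (intros; ring).
  rewrite Gam_lin by auto. ring.
Qed.

Lemma Qp : forall m γ i, length γ = 7%nat -> (list_sum γ <= m)%nat -> (i < 7)%nat ->
  USpan (Pm (list_sum γ)) (Qdiff i γ).
Proof.
  induction m as [|m IH]; intros γ i Hl Hs Hi;
  (destruct (decomp i γ) as [[δ E]|[k [a [rest [Hk E]]]]]; [lia| |]).
  1,3: (destruct δ as [|b rest];
    [ subst γ; rewrite length_app, repeat_length in Hl; simpl in Hl; lia |];
    apply us_ext with (fun _ _ _ _ => 0); [|apply us_zero];
    intros f Hf t x1 x2; unfold Qdiff; subst γ; rewrite incr_zeros, GamPow_S; ring).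
  - subst γ. rewrite sum_S in Hs. lia.
  - set (γ' := repeat 0%nat k ++ a :: rest).
    assert (Hl' : length γ' = 7%nat) by (unfold γ'; rewrite <- Hl, E; apply length_S).
    assert (Hs' : list_sum γ = S (list_sum γ')) by (rewrite E; apply sum_S).
    assert (IHg : forall δ j, length δ = 7%nat -> (list_sum δ <= m)%nat -> (j < 7)%nat ->
      USpan (Pm (S (list_sum δ))) (fun f => Gam j (GamPow δ f))).
    { intros δ j H1 H2 H3. apply Qgen_of; auto. }
    rewrite Hs'.
    apply us_ext with (fun f t x1 x2 => Gam k (Qdiff i γ' f) t x1 x2 +
        sumR (map (fun l => cc i k l * Gam l (GamPow γ' f) t x1 x2) (seq 0 7))).
    + intros f Hf t x1 x2.
      assert (Hφ : smooth (GamPow γ' f)) by (apply smooth_GamPow; auto).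
      unfold Qdiff. rewrite E. rewrite GamPow_S. fold γ'.
      rewrite incr_lt by auto. rewrite GamPow_S.
      rewrite commut; [|lia|lia|auto].
      unfold γ'. rewrite <- (incr_lt i k a rest) by auto. fold γ'.
      rewrite Gam_lin_minus by (auto using smooth_Gam, smooth_GamPow).
      ring.
    + apply us_add.
      * apply us_map with (P := Pm (list_sum γ')).
        -- intros g B [EB [Hg1 Hg2]]. subst B. split; [auto|].
           eapply us_mono; [|apply IHg; auto; lia].
           intros g' B' [? [? ?]]. split; auto. split; auto. lia.
        -- apply IH; auto. lia.
      * apply us_sum. intros l Hl0. right. apply in_seq in Hl0. apply IHg; auto. lia. lia.
Qed.

Lemma Qgen γ i : length γ = 7%nat -> (i < 7)%nat -> USpan (Pm (S (list_sum γ))) (fun f => Gam i (GamPow γ f)).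
Proof. intros. apply Qgen_of; auto. apply (Qp (list_sum γ)); auto. Qed.

Lemma span_Gam n G i : (i < 7)%nat -> USpan (Pm n) G -> USpan (Pm (S n)) (fun f => Gam i (G f)).
Proof.
  intros Hi H. apply us_map with (P := Pm n); auto.
  intros g B [EB [Hg1 Hg2]]. subst B. split; [auto|].
  eapply us_mono; [|apply Qgen; auto].
  intros g' B' [? [? ?]]. split; auto. split; auto. lia.
Qed.

Lemma span_iter a n G i : (i < 7)%nat -> USpan (Pm n) G -> USpan (Pm (n + a)) (fun f => Nat.iter a (Gam i) (G f)).
Proof.
  intros Hi H. induction a as [|a IH].
  - rewrite Nat.add_0_r. exact H.
  - rewrite Nat.add_succ_r. simpl. apply span_Gam; auto.
Qed.

Lemma span_gam_from al : forall i0 n G, (i0 + length al <= 7)%nat -> USpan (Pm n) G ->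
  USpan (Pm (n + list_sum al)) (fun f => gam_from i0 al (G f)).
Proof.
  induction al as [|a rest IH]; intros i0 n G Hlen H; simpl.
  - rewrite Nat.add_0_r. exact H.
  - simpl in Hlen.
    replace (n + (a + list_sum rest))%nat with (n + list_sum rest + a)%nat by lia.
    apply (span_iter a (n + list_sum rest) (fun f => gam_from (S i0) rest (G f)) i0); [lia|].
    apply IH; auto. lia.
Qed.

Lemma span_Gam1 j : (j < 7)%nat -> USpan (Pm 1) (fun f => Gam j f).
Proof. intros Hj. apply (Qgen (repeat 0%nat 7) j); auto. Qed.

Lemma span_LHS s al j : In al (multi_indices 7 s) -> (j < 7)%nat ->
  USpan (Pm (S s)) (fun f => GamPow al (Gam j f)).
Proof.
  intros Hal Hj. apply In_mi in Hal. destruct Hal as [Hl Hs].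
  eapply us_mono; [|apply (span_gam_from al 0 1 (fun f => Gam j f)); [lia|apply span_Gam1; auto]].
  intros g B [? [? ?]]. split; auto. split; auto. lia.
Qed.

Definition PD (n : nat) : list nat -> (fn -> fn) -> Prop :=
  fun δ B => (exists l, (l < 3)%nat /\ B = dir l) /\ length δ = 7%nat /\ (list_sum δ <= n)%nat.

Lemma Gam_dir l h : (l < 3)%nat -> Gam (4 + l) h = dir l h.
Proof. intros H. destruct l as [|[|[|l]]]; try reflexivity; lia. Qed.

Lemma cc_zero l k m : (l < 3)%nat -> (k < 7)%nat -> (m < 4)%nat -> cc (4 + l) k m = 0.
Proof.
  intros Hl Hk Hm.
  assert (l = 0 \/ l = 1 \/ l = 2)%nat as El by lia.
  assert (k = 0 \/ k = 1 \/ k = 2 \/ k = 3 \/ k = 4 \/ k = 5 \/ k = 6)%nat as Ek by lia.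
  assert (m = 0 \/ m = 1 \/ m = 2 \/ m = 3)%nat as Em by lia.
  destruct El as [->|[->| ->]]; destruct Ek as [->|[->|[->|[->|[->|[->| ->]]]]]];
  destruct Em as [->|[->|[->| ->]]]; reflexivity.
Qed.

Lemma dspan : forall m δ l, length δ = 7%nat -> (list_sum δ <= m)%nat -> (l < 3)%nat ->
  USpan (PD (list_sum δ)) (fun f => dir l (GamPow δ f)).
Proof.
  induction m as [|m IH]; intros δ l Hl Hs Hl3;
  (destruct (decomp 7 δ) as [[δ0 E]|[k [a [rest [Hk E]]]]]; [lia| |]).
  1,3: (destruct δ0 as [|b rest];
    [| subst δ; rewrite length_app, repeat_length in Hl; simpl in Hl; lia];
    rewrite app_nil_r in E; subst δ;
    apply us_ext with (fun f => GamPow (repeat 0%nat 7) (dir l f)); [intros; reflexivity|];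
    apply us_gen; split; [exists l; auto|]; split; auto).
  - subst δ. rewrite sum_S in Hs. lia.
  - set (δ' := repeat 0%nat k ++ a :: rest).
    assert (Hl' : length δ' = 7%nat) by (unfold δ'; rewrite <- Hl, E; apply length_S).
    assert (Hs' : list_sum δ = S (list_sum δ')) by (rewrite E; apply sum_S).
    rewrite Hs'.
    apply us_ext with (fun f t x1 x2 => Gam k (dir l (GamPow δ' f)) t x1 x2 +
        sumR (map (fun mm => cc (4 + l) k mm * Gam mm (GamPow δ' f) t x1 x2) (seq 0 7))).
    + intros f Hf t x1 x2.
      rewrite E, GamPow_S. fold δ'.
      rewrite <- (Gam_dir l (Gam k (GamPow δ' f))) by auto.
      rewrite (commut (4 + l) k (GamPow δ' f)); [|lia|lia|apply smooth_GamPow; auto].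
      rewrite Gam_dir by auto. reflexivity.
    + apply us_add.
      * apply us_map with (P := PD (list_sum δ')).
        -- intros g B [[l' [Hl'3 EB]] [Hg1 Hg2]]. subst B. split; [intros; apply smooth_dir; auto|].
           eapply us_mono; [|apply (us_comp (Pm (S (list_sum g))) (fun f => Gam k (GamPow g f)) (dir l')); [intros; apply smooth_dir; auto|apply Qgen; auto; lia]].
           intros g' B' [B0 [[EB0 [H1 H2]] EB']]. subst B0. subst B'.
           split; [exists l'; split; auto|]. split; auto. lia.
        -- apply IH; auto. lia.
      * apply us_sum. intros mm Hmm. apply in_seq in Hmm.
        destruct (Nat.lt_ge_cases mm 4) as [Hm4|Hm4].
        -- left. apply cc_zero; auto; lia.
        -- right. replace mm with (4 + (mm - 4))%nat by lia.
           apply us_ext with (fun f => dir (mm - 4) (GamPow δ' f)).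
           { intros. rewrite Gam_dir by lia. reflexivity. }
           eapply us_mono; [|apply IH; auto; try lia].
           intros g B [? [? ?]]. repeat split; auto; lia.
Qed.

Lemma sumR_nonneg {X} (L : list X) (F : X -> R) : (forall y, In y L -> 0 <= F y) -> 0 <= sumR (map F L).
Proof. induction L; simpl; intros H; [lra|]. pose proof (H a (or_introl eq_refl)). pose proof (IHL (fun y Hy => H y (or_intror Hy))). lra. Qed.

Lemma sumR_in {X} (L : list X) (F : X -> R) x : (forall y, In y L -> 0 <= F y) -> In x L -> F x <= sumR (map F L).
Proof.
  induction L; simpl; intros H Hx; [contradiction|].
  destruct Hx as [<-|Hx].
  - pose proof (sumR_nonneg L F (fun y Hy => H y (or_intror Hy))). lra.
  - pose proof (H a (or_introl eq_refl)). pose proof (IHL (fun y Hy => H y (or_intror Hy)) Hx). lra.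
Qed.

Lemma sum_bound {X} (L : list X) (F : X -> fn -> R -> R -> R -> R) (M : fn -> R -> R -> R -> R) :
  (forall x, In x L -> exists K, 0 <= K /\ forall f t x1 x2, smooth f -> (x1 <> 0 \/ x2 <> 0) ->
     F x f t x1 x2 <= K * M f t x1 x2) ->
  exists K, 0 <= K /\ forall f t x1 x2, smooth f -> (x1 <> 0 \/ x2 <> 0) ->
     sumR (map (fun x => F x f t x1 x2) L) <= K * M f t x1 x2.
Proof.
  induction L as [|x L IH]; intros H.
  - exists 0. split; [lra|]. intros; simpl. lra.
  - destruct (H x (or_introl eq_refl)) as [K1 [HK1 P1]].
    destruct IH as [K2 [HK2 P2]]; [intros; apply H; simpl; auto|].
    exists (K1 + K2). split; [lra|]. intros f t x1 x2 Hf Hx. simpl.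
    specialize (P1 f t x1 x2 Hf Hx). specialize (P2 f t x1 x2 Hf Hx). lra.
Qed.

Lemma uniformize {X} (L : list X) (Pr : X -> R -> Prop) :
  (forall x K K', 0 <= K -> K <= K' -> Pr x K -> Pr x K') ->
  (forall x, In x L -> exists K, 0 <= K /\ Pr x K) -> exists K, 0 <= K /\ forall x, In x L -> Pr x K.
Proof.
  intros Hm. induction L as [|x L IH]; intros H.
  - exists 0. split; [lra|]. intros x [].
  - destruct (H x (or_introl eq_refl)) as [K1 [HK1 P1]].
    destruct IH as [K2 [HK2 P2]]; [intros; apply H; simpl; auto|].
    exists (K1 + K2). split; [lra|]. intros y [<-|Hy].
    + apply (Hm _ K1); auto; lra.
    + apply (Hm _ K2); auto; lra.
Qed.

Lemma normx_pos x1 x2 : (x1 <> 0 \/ x2 <> 0) -> 0 < normx x1 x2.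
Proof.
  intros H. unfold normx. apply sqrt_lt_R0.
  destruct H; [assert (0 < x1 ^ 2) by (apply pow2_gt_0; auto); pose proof (pow2_ge_0 x2)
              |assert (0 < x2 ^ 2) by (apply pow2_gt_0; auto); pose proof (pow2_ge_0 x1)]; lra.
Qed.

Lemma normx_sq x1 x2 : normx x1 x2 * normx x1 x2 = x1 * x1 + x2 * x2.
Proof. unfold normx. rewrite sqrt_sqrt; [ring|]. pose proof (pow2_ge_0 x1); pose proof (pow2_ge_0 x2); lra. Qed.

Lemma abs_le_normx1 x1 x2 : Rabs x1 <= normx x1 x2.
Proof.
  unfold normx. rewrite <- sqrt_Rsqr_abs. apply sqrt_le_1_alt. unfold Rsqr. pose proof (pow2_ge_0 x2). simpl. lra.
Qed.
Lemma abs_le_normx2 x1 x2 : Rabs x2 <= normx x1 x2.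
Proof.
  unfold normx. rewrite <- sqrt_Rsqr_abs. apply sqrt_le_1_alt. unfold Rsqr. pose proof (pow2_ge_0 x1). simpl. lra.
Qed.
Lemma abs_le_japan y : Rabs y <= japan y.
Proof. unfold japan. rewrite <- sqrt_Rsqr_abs. apply sqrt_le_1_alt. unfold Rsqr. simpl. lra. Qed.
Lemma japan_ge1 y : 1 <= japan y.
Proof. unfold japan. apply Rle_trans with (sqrt 1); [rewrite sqrt_1; lra|]. apply sqrt_le_1_alt. pose proof (pow2_ge_0 y). lra. Qed.

Lemma mulb a A b : Rabs a <= b -> Rabs (a * A) <= b * Rabs A.
Proof. intros H. rewrite Rabs_mult. apply Rmult_le_compat_r; auto. apply Rabs_pos. Qed.

Lemma pt_bound k φ t x1 x2 : (x1 <> 0 \/ x2 <> 0) ->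
  Rabs (Gam k φ t x1 x2) <= normx x1 x2 * (Rabs (Z1 φ t x1 x2) + Rabs (Z2 φ t x1 x2)) +
    japan (t - normx x1 x2) * (Rabs (dir 0 φ t x1 x2) + Rabs (dir 1 φ t x1 x2) + Rabs (dir 2 φ t x1 x2)).
Proof.
  intros Hx. pose proof (normx_pos x1 x2 Hx) as Hr. pose proof (normx_sq x1 x2) as Hsq.
  set (r := normx x1 x2) in *. set (J := japan (t - r)).
  pose proof (abs_le_normx1 x1 x2) as B1. pose proof (abs_le_normx2 x1 x2) as B2. fold r in B1, B2.
  pose proof (abs_le_japan (t - r)) as BJ. fold J in BJ. pose proof (japan_ge1 (t - r)) as J1. fold J in J1.
  change (dir 0 φ) with (d0 φ). change (dir 1 φ) with (Defs.d1 φ). change (dir 2 φ) with (Defs.d2 φ).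
  set (D0 := d0 φ t x1 x2). set (D1 := Defs.d1 φ t x1 x2). set (D2 := Defs.d2 φ t x1 x2).
  assert (EZ1 : Z1 φ t x1 x2 = x1 / r * D0 + D1) by reflexivity.
  assert (EZ2 : Z2 φ t x1 x2 = x2 / r * D0 + D2) by reflexivity.
  set (z1 := Z1 φ t x1 x2) in *. set (z2 := Z2 φ t x1 x2) in *.
  pose proof (Rabs_pos z1). pose proof (Rabs_pos z2). pose proof (Rabs_pos D0). pose proof (Rabs_pos D1). pose proof (Rabs_pos D2).
  assert (HJ0 : J * Rabs D0 <= J * (Rabs D0 + Rabs D1 + Rabs D2)) by (apply Rmult_le_compat_l; lra).
  assert (HJ1 : J * Rabs D1 <= J * (Rabs D0 + Rabs D1 + Rabs D2)) by (apply Rmult_le_compat_l; lra).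
  assert (HJ2 : J * Rabs D2 <= J * (Rabs D0 + Rabs D1 + Rabs D2)) by (apply Rmult_le_compat_l; lra).
  assert (Hz1 : r * Rabs z1 <= r * (Rabs z1 + Rabs z2)) by (apply Rmult_le_compat_l; lra).
  assert (Hz2 : r * Rabs z2 <= r * (Rabs z1 + Rabs z2)) by (apply Rmult_le_compat_l; lra).
  assert (Hrz : 0 <= r * (Rabs z1 + Rabs z2)) by (apply Rmult_le_pos; lra).
  assert (HJd : 0 <= J * (Rabs D0 + Rabs D1 + Rabs D2)) by (apply Rmult_le_pos; lra).
  assert (Rr : Rabs r <= r) by (rewrite Rabs_right; lra).
  destruct k as [|[|[|[|[|[|k]]]]]]; simpl.
  -
    assert (E : S_op φ t x1 x2 = (t - r) * D0 + x1 * z1 + x2 * z2).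
    { unfold S_op. fold D0 D1 D2. rewrite EZ1, EZ2.
      assert (Hq : (x1 * x1 + x2 * x2) / r = r) by (rewrite <- Hsq; field; lra).
      replace ((t - r) * D0 + x1 * (x1 / r * D0 + D1) + x2 * (x2 / r * D0 + D2)) with
        (t * D0 + x1 * D1 + x2 * D2 + ((x1 * x1 + x2 * x2) / r - r) * D0) by (field; lra).
      rewrite Hq. ring. }
    rewrite E. pose proof (mulb (t - r) D0 J BJ). pose proof (mulb x1 z1 r B1). pose proof (mulb x2 z2 r B2).
    pose proof (Rabs_triang ((t - r) * D0 + x1 * z1) (x2 * z2)).
    pose proof (Rabs_triang ((t - r) * D0) (x1 * z1)). lra.
  - assert (E : L1_op φ t x1 x2 = r * z1 + (t - r) * D1).
    { unfold L1_op. fold D0 D1. rewrite EZ1. field. lra. }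
    rewrite E. pose proof (mulb r z1 r Rr). pose proof (mulb (t - r) D1 J BJ).
    pose proof (Rabs_triang (r * z1) ((t - r) * D1)). lra.
  - assert (E : L2_op φ t x1 x2 = r * z2 + (t - r) * D2).
    { unfold L2_op. fold D0 D2. rewrite EZ2. field. lra. }
    rewrite E. pose proof (mulb r z2 r Rr). pose proof (mulb (t - r) D2 J BJ).
    pose proof (Rabs_triang (r * z2) ((t - r) * D2)). lra.
  - assert (E : Om_op φ t x1 x2 = x1 * z2 + (- x2) * z1).
    { unfold Om_op. fold D1 D2. rewrite EZ1, EZ2. field. lra. }
    rewrite E. pose proof (mulb x1 z2 r B1). assert (Rabs (- x2) <= r) by (rewrite Rabs_Ropp; auto).
    pose proof (mulb (- x2) z1 r H5). pose proof (Rabs_triang (x1 * z2) ((- x2) * z1)). lra.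
  - fold D0. assert (Rabs D0 <= J * Rabs D0) by (rewrite <- (Rmult_1_l (Rabs D0)) at 1; apply Rmult_le_compat_r; lra). lra.
  - fold D1. assert (Rabs D1 <= J * Rabs D1) by (rewrite <- (Rmult_1_l (Rabs D1)) at 1; apply Rmult_le_compat_r; lra). lra.
  - fold D2. assert (Rabs D2 <= J * Rabs D2) by (rewrite <- (Rmult_1_l (Rabs D2)) at 1; apply Rmult_le_compat_r; lra). lra.
Qed.

Lemma seminorm_nonneg s f t x1 x2 : 0 <= seminorm s f t x1 x2.
Proof. unfold seminorm. apply sumR_nonneg. intros; apply Rabs_pos. Qed.

Lemma normDeriv_nonneg s f t x1 x2 : 0 <= normDeriv s f t x1 x2.
Proof. unfold normDeriv. apply sumR_nonneg. intros; apply seminorm_nonneg. Qed.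

Lemma normZ_nonneg s f t x1 x2 : 0 <= normZ s f t x1 x2.
Proof. unfold normZ. apply sumR_nonneg. intros. pose proof (Rabs_pos (Z1 (GamPow y f) t x1 x2)). pose proof (Rabs_pos (Z2 (GamPow y f) t x1 x2)). lra. Qed.

Lemma japan_nonneg y : 0 <= japan y.
Proof. pose proof (japan_ge1 y). lra. Qed.

Lemma normx_nonneg x1 x2 : 0 <= normx x1 x2.
Proof. unfold normx. apply sqrt_pos. Qed.

Lemma KD_exists s : exists KD, 0 <= KD /\ forall δ, In δ (multi_indices 7 s) -> forall l, (l < 3)%nat ->
  forall f, smooth f -> forall t x1 x2, Rabs (dir l (GamPow δ f) t x1 x2) <= KD * normDeriv s f t x1 x2.
Proof.
  apply (uniformize (multi_indices 7 s) (fun δ K => forall l, (l < 3)%nat ->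
    forall f, smooth f -> forall t x1 x2, Rabs (dir l (GamPow δ f) t x1 x2) <= K * normDeriv s f t x1 x2)).
  { intros δ K K' HK HKK' P l Hl f Hf t x1 x2. eapply Rle_trans; [apply P; auto|].
    apply Rmult_le_compat_r; auto. apply normDeriv_nonneg. }
  intros δ Hδ. apply In_mi in Hδ. destruct Hδ as [Hδl Hδs].
  destruct (uniformize (seq 0 3) (fun l K => (l < 3)%nat ->
    forall f, smooth f -> forall t x1 x2, Rabs (dir l (GamPow δ f) t x1 x2) <= K * normDeriv s f t x1 x2))
    as [K [HK P]].
  3:{ exists K. split; auto. intros l Hl. apply P; auto. apply in_seq; lia. }
  - intros l K K' HK HKK' P Hl f Hf t x1 x2. eapply Rle_trans; [apply P; auto|].
    apply Rmult_le_compat_r; auto. apply normDeriv_nonneg.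
  - intros l Hl. apply in_seq in Hl.
    destruct (us_bound _ _ (dspan (list_sum δ) δ l Hδl (le_n _) ltac:(lia))) as [K [HK P]].
    exists K. split; auto. intros _ f Hf t x1 x2. apply P; auto.
    intros g B [[l' [Hl' EB]] [Hg1 Hg2]]. subst B.
    unfold normDeriv. eapply Rle_trans; [|apply (sumR_in _ (fun j => seminorm s (dir j f) t x1 x2) l')].
    + unfold seminorm. apply (sumR_in _ (fun al => Rabs (GamPow al (dir l' f) t x1 x2)) g).
      * intros; apply Rabs_pos.
      * apply In_mi. split; auto. lia.
    + intros; apply seminorm_nonneg.
    + apply in_seq; lia.
Qed.

Lemma gen_bound s KD : 0 <= KD -> (forall δ, In δ (multi_indices 7 s) -> forall l, (l < 3)%nat ->
  forall f, smooth f -> forall t x1 x2, Rabs (dir l (GamPow δ f) t x1 x2) <= KD * normDeriv s f t x1 x2) ->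
  forall g B, Pm (S s) g B -> forall f, smooth f -> forall t x1 x2, (x1 <> 0 \/ x2 <> 0) ->
  Rabs (GamPow g (B f) t x1 x2) <= normx x1 x2 * normZ s f t x1 x2 +
     japan (t - normx x1 x2) * (3 * KD * normDeriv s f t x1 x2).
Proof.
  intros HKD HD g B [EB [Hl [Hs1 Hs2]]] f Hf t x1 x2 Hx. subst B.
  destruct (decomp 7 g) as [[δ0 E]|[k [a [rest [Hk E]]]]]; [lia| |].
  - destruct δ0; [|subst g; rewrite length_app, repeat_length in Hl; simpl in Hl; lia].
    subst g. rewrite app_nil_r in Hs1. simpl in Hs1. lia.
  - set (δ' := repeat 0%nat k ++ a :: rest).
    assert (Hl' : length δ' = 7%nat) by (unfold δ'; rewrite <- Hl, E; apply length_S).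
    assert (Hs' : list_sum g = S (list_sum δ')) by (rewrite E; apply sum_S).
    assert (Hin : In δ' (multi_indices 7 s)) by (apply In_mi; split; auto; lia).
    rewrite E, GamPow_S. fold δ'.
    eapply Rle_trans; [apply pt_bound; auto|].
    apply Rplus_le_compat.
    + apply Rmult_le_compat_l; [apply normx_nonneg|].
      unfold normZ. apply (sumR_in _ (fun al => Rabs (Z1 (GamPow al f) t x1 x2) + Rabs (Z2 (GamPow al f) t x1 x2)) δ'); auto.
      intros. pose proof (Rabs_pos (Z1 (GamPow y f) t x1 x2)). pose proof (Rabs_pos (Z2 (GamPow y f) t x1 x2)). lra.
    + apply Rmult_le_compat_l; [apply japan_nonneg|].
      pose proof (HD δ' Hin 0%nat ltac:(lia) f Hf t x1 x2).
      pose proof (HD δ' Hin 1%nat ltac:(lia) f Hf t x1 x2).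
      pose proof (HD δ' Hin 2%nat ltac:(lia) f Hf t x1 x2). lra.
Qed.

Theorem lemma2p6 : forall s : nat, exists C : R, 0 < C /\
  forall psi : fn, smooth psi ->
  forall t x1 x2 : R, (x1 <> 0 \/ x2 <> 0) ->
    normGamma s psi t x1 x2 <=
      C * normx x1 x2 * normZ s psi t x1 x2
      + C * japan (t - normx x1 x2) * normDeriv s psi t x1 x2.
Proof.
  intros s. destruct (KD_exists s) as [KD [HKD HD]].
  set (M := fun f t x1 x2 => normx x1 x2 * normZ s f t x1 x2 +
     japan (t - normx x1 x2) * (3 * KD * normDeriv s f t x1 x2)).
  destruct (sum_bound (seq 0 7) (fun j f t x1 x2 => seminorm s (Gam j f) t x1 x2) M) as [K [HK P]].
  { intros j Hj. apply in_seq in Hj. unfold seminorm.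
    apply (sum_bound (multi_indices 7 s) (fun al f t x1 x2 => Rabs (GamPow al (Gam j f) t x1 x2)) M).
    intros al Hal.
    destruct (us_bound _ _ (span_LHS s al j Hal ltac:(lia))) as [K [HK P]].
    exists K. split; auto. intros f t x1 x2 Hf Hx. apply P; auto.
    intros g B HgB. apply (gen_bound s KD HKD HD g B HgB f Hf t x1 x2 Hx). }
  exists (K * (1 + 3 * KD) + 1). split; [nra|].
  intros psi Hpsi t x1 x2 Hx.
  specialize (P psi t x1 x2 Hpsi Hx). unfold normGamma. eapply Rle_trans; [exact P|].
  unfold M. pose proof (normx_nonneg x1 x2). pose proof (japan_nonneg (t - normx x1 x2)).
  pose proof (normZ_nonneg s psi t x1 x2). pose proof (normDeriv_nonneg s psi t x1 x2).
  set (a := normx x1 x2 * normZ s psi t x1 x2).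
  set (b := japan (t - normx x1 x2) * normDeriv s psi t x1 x2).
  assert (Ha : 0 <= a) by (apply Rmult_le_pos; auto).
  assert (Hb : 0 <= b) by (apply Rmult_le_pos; auto).
  replace (a + japan (t - normx x1 x2) * (3 * KD * normDeriv s psi t x1 x2))
    with (a + 3 * KD * b) by (unfold b; ring).
  replace ((K * (1 + 3 * KD) + 1) * normx x1 x2 * normZ s psi t x1 x2 +
           (K * (1 + 3 * KD) + 1) * japan (t - normx x1 x2) * normDeriv s psi t x1 x2)
    with ((K * (1 + 3 * KD) + 1) * a + (K * (1 + 3 * KD) + 1) * b) by (unfold a, b; ring).
  assert (0 <= K * KD) by (apply Rmult_le_pos; auto).
  assert (0 <= K * KD * b) by (apply Rmult_le_pos; auto).
  assert (0 <= K * a) by (apply Rmult_le_pos; auto).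
  assert (0 <= K * b) by (apply Rmult_le_pos; auto).
  assert (0 <= K * KD * a) by (apply Rmult_le_pos; auto).
  assert (E : (K * (1 + 3 * KD) + 1) * a + (K * (1 + 3 * KD) + 1) * b - K * (a + 3 * KD * b)
              = 3 * (K * KD * a) + a + K * b + b) by ring.
  assert (Hpos : 0 <= 3 * (K * KD * a) + a + K * b + b) by lra.
  rewrite <- E in Hpos. apply Rge_le, Rminus_ge, Rle_ge. exact Hpos.
Qed.
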